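(* Let $\mathbf{P}=\{p_n(x)\}_{n\ge0}$ be a sequence of complex polynomials with $\deg p_n=n$, $p_0=1$, and let $\bar{\mathbf{P}}=\{\bar p_n(x)\}$ with $\bar p_0(x)=1$, $\bar p_n(x)=xp_{n-1}(x)$ for $n\ge1$. Then for $n\ge2$ and $1\le k\le n-1$, $$A_{n,k}(\bar{\mathbf{P}})=(k+1)A_{n-1,k}(\mathbf{P})+(n-k)A_{n-1,k-1}(\mathbf{P}),$$ and for $n\ge1$, $A_{n,0}(\bar{\mathbf{P}})=\bar p_n(1)=A_{n-1,0}(\mathbf{P})=p_{n-1}(1)$.
   Context: For any sequence $\mathbf{Q}=\{q_n\}$ with $\deg q_n=n$, $q_0=1$, the Eulerian numbers $A_{n,k}(\mathbf{Q})$ ($0\le k\le n$) are the unique coefficients with $q_n(x)=\sum_{k=0}^{n}A_{n,k}(\mathbf{Q})\binom{x+n-k-1}{n}$, where $\binom{y}{n}=y(y-1)\cdots(y-n+1)/n!$. *)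

(* Defs.v *)
From HB Require Import structures.
From mathcomp Require Import all_boot all_order all_algebra.
From mathcomp Require Import complex.
From mathcomp Require Import reals.
From Stdlib Require Import ClassicalEpsilon.
Set Implicit Arguments. Unset Strict Implicit. Unset Printing Implicit Defensive.
Import Order.TTheory GRing.Theory Num.Theory.
Local Open Scope ring_scope.

Definition binomp (F : fieldType) (p : {poly F}) (n : nat) : {poly F} :=
  (n`!%:R)^-1 *: \prod_(i < n) (p - (i%:R)%:P).

(* binom(x + n - k - 1, n) as a polynomial in x (the shift n-k-1 may be -1) *)
Definition eulbasis (F : fieldType) (n k : nat) : {poly F} :=
  binomp ('X + ((n%:Z - k%:Z - 1)%:~R)%:P) n.

Definition eulerian_coeffs (F : fieldType) (q : {poly F}) (n : nat)
    (a : nat -> F) : Prop :=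
  q = \sum_(k < n.+1) a k *: eulbasis F n k /\ (forall k, (n < k)%N -> a k = 0).

(* A_{n,k}(Q) for a sequence Q : nat -> {poly F}: the (unique) coefficients
   of Q n in the basis binom(x+n-k-1, n), k = 0..n. *)
Definition eulerA (F : fieldType) (Q : nat -> {poly F}) (n k : nat) : F :=
  epsilon (inhabits (fun _ : nat => 0 : F)) (eulerian_coeffs (Q n) n) k.

Definition barseq (F : fieldType) (P : nat -> {poly F}) (n : nat) : {poly F} :=
  if n is m.+1 then 'X * P m else 1.

(* Main.v *)
Require Import Defs.
From HB Require Import structures.
From mathcomp Require Import all_boot all_order all_algebra.
From mathcomp Require Import complex reals ring lra zify.
From Stdlib Require Import ClassicalEpsilon.
Set Implicit Arguments. Unset Strict Implicit. Unset Printing Implicit Defensive.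
Import Order.TTheory GRing.Theory Num.Theory.
Local Open Scope ring_scope.

Section S.
Variable F : numFieldType.
Implicit Types p : {poly F}.

Lemma binompS p n : binomp p n.+1 = (n.+1%:R)^-1 *: ((p - n%:R%:P) * binomp p n).
Proof.
rewrite /binomp big_ord_recr /= factS natrM invfM -scalerA scalerAr mulrC.
by rewrite -scalerAl -scalerAr.
Qed.

Lemma binompS1 p n : binomp (p + 1) n.+1 = (n.+1%:R)^-1 *: ((p + 1) * binomp p n).
Proof.
rewrite /binomp big_ord_recl /= factS natrM invfM -scalerA scalerAr subr0.
rewrite (eq_bigr (fun i : 'I_n => p - (i%:R)%:P)) // => i _.
rewrite /bump /= add1n -addn1 natrD polyCD polyC1; ring.
Qed.

Definition shp (n k : nat) : {poly F} := 'X + ((n%:Z - k%:Z - 1)%:~R)%:P.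

Lemma eulbE n k : eulbasis F n k = binomp (shp n k) n. Proof. by []. Qed.
Lemma shpS n k : shp n.+1 k = shp n k + 1.
Proof.
rewrite /shp -[RHS]addrA -polyC1 -polyCD; congr (_ + _%:P).
rewrite (_ : (1:F) = (1:int)%:~R) // -intrD; congr (_%:~R); lia.
Qed.
Lemma shpSS n k : shp n.+1 k.+1 = shp n k.
Proof. rewrite /shp; congr (_ + (_)%:P); congr (_%:~R); lia. Qed.

Lemma I1 n k : eulbasis F n k = eulbasis F n.+1 k - eulbasis F n.+1 k.+1.
Proof.
rewrite !eulbE shpSS shpS binompS1 binompS -scalerBr -mulrBl.
have -> : shp n k + 1 - (shp n k - (n%:R)%:P) = (n.+1%:R)%:P.
  by rewrite -natr1 polyCD polyC1; ring.
by rewrite mul_polyC scalerA mulVf ?scale1r // pnatr_eq0.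
Qed.

Lemma I2 n k : (k <= n)%N -> 'X * eulbasis F n k =
   k.+1%:R *: eulbasis F n.+1 k + (n - k)%:R *: eulbasis F n.+1 k.+1.
Proof.
move=> kn.
rewrite !eulbE shpSS shpS binompS1 binompS !scalerA ![_ * _^-1]mulrC -!scalerA.
rewrite -scalerDr !scalerAl -mulrDl.
have -> : k.+1%:R *: (shp n k + 1) + (n - k)%:R *: (shp n k - (n%:R)%:P) = n.+1%:R *: 'X.
  rewrite /shp -!mul_polyC !polyC_natr rmorph_int natrB // -natr1.
  ring.
by rewrite -scalerAl scalerA mulVf ?scale1r // pnatr_eq0.
Qed.

Lemma eval_eulb n k j : (k <= n)%N -> (eulbasis F n k).[j.+1%:R] =
  (n`!%:R)^-1 * \prod_(i < n) ((j + n - k)%:R - i%:R).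
Proof.
move=> kn; rewrite eulbE /binomp hornerZ horner_prod; congr (_ * _).
apply: eq_bigr => i _; rewrite /shp hornerD hornerN hornerD hornerX !hornerC.
congr (_ - _).
have -> : ((j + n - k)%:R : F) = ((j.+1%:Z + (n%:Z - k%:Z - 1))%:~R).
  rewrite -[LHS]/(((j+n-k)%N%:Z)%:~R : F); congr (_%:~R); lia.
by rewrite [RHS]intrD.
Qed.

Lemma eval_eulb0 n k j : (j < k <= n)%N -> (eulbasis F n k).[j.+1%:R] = 0.
Proof.
case/andP=> jk kn; rewrite eval_eulb //.
have m_lt : (j + n - k < n)%N by lia.
by rewrite (bigD1 (Ordinal m_lt)) //= subrr mul0r mulr0.
Qed.

Lemma eval_eulb1 n k : (k <= n)%N -> (eulbasis F n k).[k.+1%:R] = 1.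
Proof.
move=> kn; rewrite eval_eulb // (_ : (k + n - k = n)%N); last by lia.
rewrite (eq_bigr (fun i : 'I_n => (n - i)%N%:R)); last first.
  by move=> i _; rewrite natrB // ltnW.
by rewrite -natr_prod -ffact_prod ffactnn mulVf // pnatr_eq0 -lt0n fact_gt0.
Qed.

Lemma indep n (c : nat -> F) : \sum_(k < n.+1) c k *: eulbasis F n k = 0 ->
  forall k, (k <= n)%N -> c k = 0.
Proof.
move=> H; elim/ltn_ind => j IH jn.
have := congr1 (fun p => p.[j.+1%:R]) H.
rewrite /= horner0 horner_sum (bigD1 (Ordinal (jn : (j < n.+1)%N))) //=.
rewrite hornerZ eval_eulb1 // mulr1 big1 ?addr0 //.
move=> i /eqP ij; rewrite hornerZ.
have ilen : (i <= n)%N by rewrite -ltnS.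
case: (ltngtP i j) => [lt|gt|eq].
- by rewrite IH ?mul0r.
- by rewrite eval_eulb0 ?mulr0 // gt.
- by exfalso; apply: ij; apply: val_inj.
Qed.

Definition inspan n (q : {poly F}) :=
  exists a : nat -> F, q = \sum_(k < n.+1) a k *: eulbasis F n k.

Lemma inspan0 n : inspan n 0.
Proof. by exists (fun _ => 0); rewrite big1 // => i _; rewrite scale0r. Qed.

Lemma inspanD n p q : inspan n p -> inspan n q -> inspan n (p + q).
Proof.
move=> [a ->] [b ->]; exists (fun k => a k + b k).
by rewrite -big_split; apply: eq_bigr => i _; rewrite scalerDl.
Qed.

Lemma inspanZ n c q : inspan n q -> inspan n (c *: q).
Proof.
move=> [a ->]; exists (fun k => c * a k).
by rewrite scaler_sumr; apply: eq_bigr => i _; rewrite scalerA.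
Qed.

Lemma inspan_sum n m (f : 'I_m -> {poly F}) :
  (forall i, inspan n (f i)) -> inspan n (\sum_(i < m) f i).
Proof.
move=> Hf; apply: (big_ind (inspan n)); [exact: inspan0|exact: inspanD|by []].
Qed.

Lemma inspan_b n k : (k <= n)%N -> inspan n (eulbasis F n k).
Proof.
move=> kn; exists (fun i => (i == k)%:R).
rewrite (bigD1 (Ordinal (kn : (k < n.+1)%N))) //= eqxx scale1r big1 ?addr0 //.
move=> i /eqP ik; case: eqP => [e|_]; last by rewrite scale0r.
by exfalso; apply: ik; apply: val_inj.
Qed.

Lemma inspan_lift n q : inspan n q -> inspan n.+1 q.
Proof.
move=> [a ->]; apply: inspan_sum => i; apply: inspanZ.
rewrite I1 -[_ - _]addr0 -addrA; apply: inspanD.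
  by apply: inspan_b; rewrite ltnW // ltnS.
rewrite addr0 -scaleN1r; apply: inspanZ; apply: inspan_b.
by rewrite ltnS -ltnS.
Qed.

Lemma inspan_X n q : inspan n q -> inspan n.+1 (q * 'X).
Proof.
move=> [a ->]; rewrite mulr_suml; apply: inspan_sum => i.
rewrite -scalerAl (mulrC _ 'X) (I2 (ltn_ord i : (i <= n)%N)).
apply: inspanZ; apply: inspanD.
  by apply: inspanZ; apply: inspan_b; rewrite ltnW // ltnS.
by apply: inspanZ; apply: inspan_b; rewrite ltnS -ltnS.
Qed.

Lemma span n (q : {poly F}) : (size q <= n.+1)%N -> inspan n q.
Proof.
elim: n q => [|n IH] q sq.
  exists (fun _ => q`_0); rewrite big_ord_recl big_ord0 addr0.
  rewrite eulbE /binomp big_ord0 /= invr1 scale1r alg_polyC.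
  exact: size1_polyC.
rewrite -(poly_take_drop 1 q) expr1; apply: inspanD.
  by apply: inspan_lift; apply: IH; apply: leq_trans (size_take_poly _ _) _.
by apply: inspan_X; apply: IH; rewrite size_drop_poly; lia.
Qed.

Lemma coeffs_exists n (q : {poly F}) : (size q <= n.+1)%N -> exists a, eulerian_coeffs q n a.
Proof.
move=> /span [a ->]; exists (fun k => if (k <= n)%N then a k else 0); split.
  by apply: eq_bigr => i _; rewrite (ltn_ord i : (i <= n)%N).
by move=> k; rewrite ltnNge => /negbTE ->.
Qed.

Lemma coeffs_unique n (q : {poly F}) a b : eulerian_coeffs q n a -> eulerian_coeffs q n b ->
  forall k, a k = b k.
Proof.
move=> [Ha Za] [Hb Zb] k; case: (leqP k n) => kn; last by rewrite Za ?Zb.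
have H0 : \sum_(i < n.+1) (a i - b i) *: eulbasis F n i = 0.
  under eq_bigr => i _ do rewrite scalerBl.
  by rewrite sumrB -Ha -Hb subrr.
by apply/eqP; rewrite -subr_eq0; apply/eqP; exact: (@indep n (fun i => a i - b i) H0 k kn).
Qed.

Lemma eulerA_spec (Q : nat -> {poly F}) n : (size (Q n) <= n.+1)%N ->
  eulerian_coeffs (Q n) n (eulerA Q n).
Proof. move=> /coeffs_exists ex; exact: (@epsilon_spec _ (inhabits (fun _ : nat => 0 : F)) (eulerian_coeffs (Q n) n) ex). Qed.

Lemma eulerA_eq (Q : nat -> {poly F}) n a k : (size (Q n) <= n.+1)%N ->
  eulerian_coeffs (Q n) n a -> eulerA Q n k = a k.
Proof. by move=> /eulerA_spec H1 H2; apply: coeffs_unique H1 H2 k. Qed.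

Lemma eval1 n (q : {poly F}) a : eulerian_coeffs q n a -> q.[1] = a 0%N.
Proof.
move=> [-> _]; rewrite horner_sum big_ord_recl /= hornerZ.
have -> : (1 : F) = 0%N.+1%:R by rewrite mulr1n.
rewrite eval_eulb1 // mulr1 big1 ?addr0 // => i _.
by rewrite hornerZ eval_eulb0 ?mulr0 //= -ltnS.
Qed.
End S.

Unset Implicit Arguments.

Theorem theorem3p3 (R : realType) (P : nat -> {poly R[i]})
  (hdeg : forall n, size (P n) = n.+1) (h0 : P 0%N = 1) :
  (forall n k, (2 <= n)%N -> (1 <= k)%N -> (k <= n.-1)%N ->
     eulerA (barseq P) n k =
       (k.+1)%:R * eulerA P n.-1 k + (n - k)%:R * eulerA P n.-1 k.-1) /\
  (forall n, (1 <= n)%N ->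
     eulerA (barseq P) n 0 = (barseq P n).[1] /\
     (barseq P n).[1] = eulerA P n.-1 0 /\
     eulerA P n.-1 0 = (P n.-1).[1]).
Proof.
have sP : forall m, (size (P m) <= m.+1)%N by move=> m; rewrite hdeg.
have sB : forall m, (size (barseq P m.+1) <= m.+2)%N.
  move=> m /=; apply: leq_trans (size_mul_leq _ _) _.
  by rewrite size_polyX hdeg.
split.
  move=> [|m] k // m1 k1 km /=.
  have [Ha Za] := eulerA_spec (sP m).
  set a := eulerA P m in Ha Za *.
  pose a' k := k.+1%:R * a k + (if k is k'.+1 then (m - k')%:R * a k' else 0).
  suff Hc : eulerian_coeffs (barseq P m.+1) m.+1 a'.
    by rewrite (eulerA_eq k (sB m) Hc); case: k k1 km {Hc}.
  split; last first.
    move=> j jm; rewrite /a' Za ?mulr0 ?add0r; last by lia.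
    by case: j jm => // j jm; rewrite Za ?mulr0 //; lia.
  rewrite /= Ha mulr_sumr.
  rewrite (eq_bigr (fun i : 'I_m.+1 =>
     (i.+1%:R * a i) *: eulbasis _ m.+1 i + ((m - i)%:R * a i) *: eulbasis _ m.+1 i.+1)); last first.
    move=> i _; rewrite -scalerAr (I2 _ (ltn_ord i : (i <= m)%N)) scalerDr !scalerA.
    by rewrite [a i * _]mulrC [a i * _]mulrC.
  rewrite big_split /= /a'.
  symmetry; under eq_bigr => i _ do rewrite scalerDl.
  rewrite big_split /=; congr (_ + _).
    by rewrite big_ord_recr /= Za // mulr0 scale0r addr0.
  by rewrite big_ord_recl /= scale0r add0r.
move=> [|m] // _ /=.
have Hb := eulerA_spec (sB m).
have Hp := eulerA_spec (sP m).
split; first by rewrite (eval1 Hb).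
split; last by rewrite (eval1 Hp).
by rewrite hornerM hornerX mul1r (eval1 Hp).
Qed.
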